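(* Let $n \ge 1$, let $\alpha_w, \alpha_n \in (0,1)$ with $\alpha_w < \alpha_n$, and let $w_1, \dots, w_n \in \mathbb{R}_{\ge 0}$ with $W := \sum_{i=1}^n w_i \neq 0$. Then there exist integers $t_1, \dots, t_n \in \mathbb{Z}_{\ge 0}$, with $T := \sum_{i=1}^n t_i$, such that for every $S \subseteq [n]$ with $w(S) < \alpha_w W$ we have $t(S) < \alpha_n T$, and $$T \le \left\lceil \frac{\alpha_w(1-\alpha_w)}{\alpha_n - \alpha_w}\, n \right\rceil.$$
   Context: $[n] := \{1,\dots,n\}$. For $S \subseteq [n]$, $w(S) := \sum_{i\in S} w_i$ and $t(S) := \sum_{i \in S} t_i$. (The Weight Restriction problem asks, given $\alpha_w,\alpha_n$ and the weights, to find nonnegative integers $t_1,\dots,t_n$ minimizing $T$ subject to the displayed constraint; the theorem asserts existence of a feasible assignment, equivalently of a solution, with $T$ bounded as stated.) *)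

(* Defs.v *)
From HB Require Import structures.
From mathcomp Require Import all_boot all_order all_algebra.
From mathcomp Require Import reals.
Set Implicit Arguments. Unset Strict Implicit. Unset Printing Implicit Defensive.

(* Main.v *)
From HB Require Import structures.
From mathcomp Require Import all_boot all_order all_algebra.
From mathcomp Require Import reals.
From mathcomp Require Import ring lra.
Import Order.TTheory GRing.Theory Num.Theory.
Local Open Scope ring_scope.

Lemma step (R : realType) (n : nat) (aw : R) (w : 'I_n -> R) (i0 : 'I_n) :
  0 < aw -> aw < 1 -> (forall i, 0 <= w i) -> 0 < w i0 ->
  forall K : nat, exists (s : R) (t : 'I_n -> nat), 0 <= s /\ (\sum_(i < n) t i)%N = K /\
    forall i, (t i)%:R <= s * w i + aw /\ s * w i + aw - 1 <= (t i)%:R.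
Proof.
move=> aw0 aw1 w0 wi0; elim=> [|K [s [t [s0 [tK Ht]]]]].
  exists 0, (fun _ => 0%N); split=> //; split; first by rewrite big1.
  by move=> i; rewrite mul0r add0r; split; lra.
pose F i := ((t i)%:R + 1 - aw) / w i.
case: (@arg_minP _ _ _ i0 (fun i => 0 < w i) F wi0) => j wj0 Hmin.
have Fge i : 0 < w i -> s <= F i.
  move=> wi; rewrite /F ler_pdivlMr //; have := Ht i; lra.
exists (F j), (fun i => if i == j then (t i).+1 else t i); split.
  by apply: le_trans (Fge j wj0).
split.
  rewrite (bigD1 j) //= eqxx -tK [in RHS](bigD1 j) //=; congr (_ + _)%N.
  by apply: eq_bigr => i /negbTE ->.
move=> i; have [si1 si2] := Ht i.
case: eqP => [->|/eqP ij].
  rewrite /F mulrAC -mulrA divff ?gt_eqF // mulr1 -natr1; split; lra.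
have Fs : s * w i <= F j * w i by apply: ler_wpM2r => //; exact: Fge.
split; first lra.
have [wp|] := ltP 0 (w i).
  have h : F j <= F i by exact: Hmin.
  move: h; rewrite {2}/F ler_pdivlMr // => h.
  lra.
move=> wle; have -> : w i = 0 by apply/le_anti; rewrite wle w0.
rewrite mulr0; have := ler0n R (t i); lra.
Qed.

Theorem theorem1 (R : realType) (n : nat) (alpha_w alpha_n : R) (w : 'I_n -> R) :
  (1 <= n)%N ->
  0 < alpha_w -> alpha_w < 1 ->
  0 < alpha_n -> alpha_n < 1 ->
  alpha_w < alpha_n ->
  (forall i, 0 <= w i) ->
  \sum_(i < n) w i != 0 ->
  exists t : 'I_n -> nat,
    (forall S : {set 'I_n},
        \sum_(i in S) w i < alpha_w * \sum_(i < n) w i ->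
        ((\sum_(i in S) t i)%N)%:R < alpha_n * ((\sum_(i < n) t i)%N)%:R)
    /\ (((\sum_(i < n) t i)%N)%:Z
          <= Num.ceil (alpha_w * (1 - alpha_w) / (alpha_n - alpha_w) * n%:R))%R.
Proof.
move=> n1 aw0 aw1 an0 an1 awn w0 W0.
have [i0 wi0] : exists i0, 0 < w i0.
  case: (pickP (fun i => 0 < w i)) => [i hi|H]; first by exists i.
  case/negP: W0; apply/eqP; apply: big1 => i _.
  by apply/le_anti; rewrite w0 andbT leNgt H.
set K0 := alpha_w * (1 - alpha_w) / (alpha_n - alpha_w) * n%:R.
have K0pos : 0 < K0.
  rewrite /K0 mulr_gt0 ?ltr0n // divr_gt0 ?subr_gt0 // mulr_gt0 // subr_gt0 //.
set c := Num.ceil K0.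
have cpos : 0 < c by rewrite /c ceil_gt0.
have [s [t [s0 [tK Ht]]]] := @step R n alpha_w w i0 aw0 aw1 w0 wi0 `|c|%N.
exists t; split; last by rewrite tK gez0_abs // ltW.
move=> S hS.
have KK0 : K0 <= ((\sum_(i < n) t i)%N)%:R.
  rewrite tK; have := ceil_ge K0; rewrite -/c -{1}(gez0_abs (ltW cpos)) //.
have spos : 0 < s.
  rewrite lt_neqAle s0 andbT; apply/eqP => s0'.
  have : (\sum_(i < n) t i)%N = 0%N.
    apply: big1 => i _; have [h _] := Ht i; move: h; rewrite -s0' mul0r add0r.
    move=> h; apply/eqP; by move: (le_lt_trans h aw1); rewrite -[1 : R]/(1%:R) ltr_nat ltnS leqn0.
  by rewrite tK => c0; have := cpos; rewrite -(gez0_abs (ltW cpos)) c0.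
have nS : forall (P : pred 'I_n), ((\sum_(i < n | P i) t i)%N)%:R = \sum_(i < n | P i) (t i)%:R :> R.
  move=> P; apply: (big_morph _ (@natrD R)); by [].
rewrite !nS.
move: KK0 hS; rewrite nS.
rewrite [X in K0 <= X](bigID (fun i => i \in S)) /=.
rewrite [X in _ -> _ < _ * X](bigID (fun i => i \in S)) /=.
rewrite [X in _ < alpha_w * X](bigID (fun i => i \in S)) /=.
set tS := \sum_(i in S) (t i)%:R; set tC := \sum_(i < n | i \notin S) (t i)%:R.
set wS := \sum_(i in S) w i; set wC := \sum_(i < n | i \notin S) w i.
move=> KK0 hS.
pose cS := \sum_(i in S) (1 : R); pose cC := \sum_(i < n | i \notin S) (1 : R).
have h3 : cS + cC = n%:R.
  have e : \sum_(i < n) (1 : R) = n%:R by rewrite sumr_const card_ord.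
  by rewrite -e [RHS](bigID (fun i => i \in S)).
have h1 : tS <= s * wS + alpha_w * cS.
  rewrite /tS /wS /cS mulr_sumr mulr_sumr -big_split /=.
  by apply: ler_sum => i _; rewrite mulr1; case: (Ht i).
have h2 : s * wC + (alpha_w - 1) * cC <= tC.
  rewrite /tC /wC /cC mulr_sumr mulr_sumr -big_split /=.
  by apply: ler_sum => i _; rewrite mulr1; case: (Ht i); rewrite addrA.
have h4 : s * (wS - alpha_w * (wS + wC)) < 0.
  by rewrite pmulr_rlt0 // subr_lt0.
have h5 : (alpha_n - alpha_w) * K0 = alpha_w * (1 - alpha_w) * n%:R.
  rewrite /K0 mulrA mulrCA divff ?mulr1 //; rewrite subr_eq0 gt_eqF //.
have h6 : (alpha_n - alpha_w) * K0 <= (alpha_n - alpha_w) * (tS + tC).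
  by rewrite ler_wpM2l // subr_ge0 ltW.
have h7 : (1 - alpha_w) * tS <= (1 - alpha_w) * (s * wS + alpha_w * cS).
  by rewrite ler_wpM2l // subr_ge0 ltW.
have h8 : alpha_w * (s * wC + (alpha_w - 1) * cC) <= alpha_w * tC.
  by rewrite ler_wpM2l // ltW.
nra.
Qed.
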